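(* Let $L$ be a finite lattice, $\varphi\in M_\infty(L)$, and let $(a_1,\dots,a_n)$ be a linear extension of $L$. Set $\varphi_0=\varphi$ and $\varphi_i=\Lambda_{a_i}\varphi_{i-1}$ for $i=1,\dots,n$. Let $\Psi_i\in M_\infty(\mathcal L)$ satisfy $\Pi(\Psi_i)=\lambda(\varphi_i;a_{i+1},\cdot)$ for $i=0,\dots,n-1$, let $\Psi_n\in M_\infty(\mathcal L)$ satisfy $\Pi(\Psi_n)=\varphi_n$, and put $\Phi=\sum_{i=0}^n\Psi_i$. Then $\Phi$ is the Möbius extension of $\varphi$.
   Context: $L$ is a finite lattice with meet $\wedge$ and join $\vee$. A linear extension of $L$ is an enumeration $(a_1,\dots,a_n)$ of all elements of $L$ such that $i<j$ whenever $a_i<a_j$. Completely monotone: all iterated differences $\nabla_a\varphi(x)=\varphi(x)-\varphi(x\wedge a)$ nonnegative. $M_\infty(L)$: nonnegative completely monotone functions on $L$. A path from $a$ to $b$ is a sequence $H=(h_0,\dots,h_m)$ of distinct elements with $h_0=a$, $h_m=b$; $\varphi(H)=\sum_{i=0}^m\varphi(h_i)-\sum_{i=1}^m\varphi(h_{i-1}\vee h_i)$; $\lambda(\varphi;a,b)=\max\{\varphi(H)\}$ over such paths; $\Lambda_a\varphi(x)=\varphi(x)-\lambda(\varphi;a,x)$. $\mathcal L$ is the set of nonempty up-sets of $L$ ordered by $U\preceq V$ iff $U\supseteq V$ (meet = union); $M_\infty(\mathcal L)$ is the set of nonnegative completely monotone functions on $(\mathcal L,\preceq)$; $\Pi(\Psi)(x)=\Psi(\langle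 x\rangle^* )$ with $\langle x\rangle^*=\{y:y\ge x\}$. For $\varphi\in M_\infty(L)$ with Möbius inverse $f$ ($\varphi(x)=\sum_{y\le x}f(y)$), its Möbius extension is $\Phi(U)=\sum_{V\preceq U}F(V)$ with $F(\langle x\rangle^* )=f(x)$ and $F=0$ on non-principal up-sets. *)

(* Defs.v *)
From mathcomp Require Import all_boot all_order all_algebra.
Set Implicit Arguments. Unset Strict Implicit. Unset Printing Implicit Defensive.
Import Order.Theory GRing.Theory Num.Theory.
Local Open Scope ring_scope.

Section Defs.
Context {d : Order.disp_t} {T : finLatticeType d} {R : realFieldType}.

Definition nabla {X : Type} (meet : X -> X -> X) (a : X) (g : X -> R) : X -> R :=
  fun x => g x - g (meet x a).

(* all iterated differences (of order >= 1, with arguments in D) are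
   nonnegative on D; D must be closed under meet *)
Definition completely_monotone_on {X : Type} (D : pred X) (meet : X -> X -> X)
  (g : X -> R) : Prop :=
  forall s : seq X, (0 < size s)%N -> all D s ->
  forall x, D x -> 0 <= foldr (nabla meet) g s x.

Definition M_inf_L (phi : T -> R) : Prop :=
  (forall x, 0 <= phi x) /\ completely_monotone_on predT (@Order.meet d T) phi.

Definition pathval (phi : T -> R) (h0 : T) (t : seq T) : R :=
  \sum_(x <- h0 :: t) phi x
  - \sum_(y <- pairmap (fun u v => (u `|` v)%O) h0 t) phi y.

Definition all_uniq_seqs : seq (seq T) :=
  flatten [seq permutations (enum A) | A : {set T}].

Definition paths_from (a b : T) : seq (seq T) :=
  [seq t <- all_uniq_seqs | uniq (a :: t) && (last a t == b)].

(* The seed of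
   the max is the value of an actual path from a to b ((a) if a = b, (a,b)
   otherwise), so this is exactly the maximum over the (nonempty) set. *)
Definition lambda (phi : T -> R) (a b : T) : R :=
  \big[Num.max/pathval phi a (if a == b then [::] else [:: b])]_(t <- paths_from a b)
     pathval phi a t.

Definition Lambda (a : T) (phi : T -> R) : T -> R :=
  fun x => phi x - lambda phi a x.

(* the poset \mathcal L of nonempty up-sets; U <= V iff U \supseteq V,
   meet = union.  Functions on \mathcal L are functions {set T} -> R whose
   values outside \mathcal L are irrelevant. *)
Definition up_closed (U : {set T}) : bool :=
  [forall x in U, forall y, (x <= y)%O ==> (y \in U)].

Definition inLL (U : {set T}) : bool := (U != set0) && up_closed U.

Definition prin (x : T) : {set T} := [set y | (x <= y)%O].

Definition Pi (Psi : {set T} -> R) : T -> R := fun x => Psi (prin x).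

Definition M_inf_LL (Psi : {set T} -> R) : Prop :=
  (forall U, inLL U -> 0 <= Psi U) /\
  completely_monotone_on inLL (@setU T) Psi.

Definition moebF (f : T -> R) (V : {set T}) : R :=
  if [pick x | V == prin x] is Some x then f x else 0.

(* Moebius extension: Phi(U) = sum_{V <= U} F(V), i.e. over V in \mathcal L
   with V \supseteq U *)
Definition moebius_ext (f : T -> R) (U : {set T}) : R :=
  \sum_(V : {set T} | inLL V && (U \subset V)) moebF f V.

End Defs.

(* Main.v *)
Require Import Defs.
From mathcomp Require Import all_boot all_order all_algebra.
From Stdlib Require Import FunctionalExtensionality.
From mathcomp Require Import lra.
Import Order.Theory GRing.Theory Num.Theory.
Local Open Scope ring_scope.

Section Aux.
Context {d : Order.disp_t} {T : finLatticeType d} {R : realFieldType}.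
Implicit Types (g : T -> R).

Definition rep g : T -> R := fun z => \sum_(y | (y <= z)%O) g y.

Lemma sum_count g (s : seq T) : \sum_(x <- s) rep g x =
  \sum_y g y * (count (fun z => (y <= z)%O) s)%:R.
Proof.
elim: s => [|x s IH]; first by rewrite big_nil big1 // => y _; rewrite mulr0.
rewrite big_cons IH /rep big_mkcond -big_split /=; apply: eq_bigr => y _.
rewrite natrD mulrDr; case: (y <= x)%O; by rewrite ?mulr1 ?mulr0 ?add0r.
Qed.

Lemma cnt_bound y h0 (t : seq T) :
  ((count (fun z => (y <= z)%O) (h0 :: t))%:R
   - (count (fun z => (y <= z)%O) (pairmap (fun u v => (u `|` v)%O) h0 t))%:R : R)
  <= ((y <= h0)%O && (y <= last h0 t)%O)%:R.
Proof.
elim: t h0 => [|h1 t IH] h0 /=.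
  by rewrite addn0 subr0 andbb.
have := IH h1; rewrite /= !natrD.
set A := (count _ t)%:R; set B := (count _ (pairmap _ h1 t))%:R.
case Hh0: (y <= h0)%O; case Hh1: (y <= h1)%O.
- rewrite (le_trans Hh0 (leUl _ _)) /=; case: (y <= last h1 t)%O => /= h; lra.
- rewrite (le_trans Hh0 (leUl _ _)) /=; case: (y <= last h1 t)%O => /= h; lra.
- rewrite (le_trans Hh1 (leUr _ _)) /=; case: (y <= last h1 t)%O => /= h; lra.
- case: (y <= h0 `|` h1)%O; case: (y <= last h1 t)%O => /= h; lra.
Qed.


Lemma cnt_all y h0 (t : seq T) : (forall z, (y <= z)%O) ->
  ((count (fun z => (y <= z)%O) (h0 :: t))%:R
   - (count (fun z => (y <= z)%O) (pairmap (fun u v => (u `|` v)%O) h0 t))%:R : R) = 1.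
Proof.
move=> hy; rewrite !(eq_count (a2:=predT)) // !count_predT size_pairmap /=.
rewrite -addn1 natrD; lra.
Qed.

Lemma pathval_le g h0 t : (forall y, 0 <= g y \/ forall z, (y <= z)%O) ->
  pathval (rep g) h0 t <= \sum_y g y * ((y <= h0)%O && (y <= last h0 t)%O)%:R.
Proof.
move=> Hg; rewrite /pathval !sum_count -sumrB; apply: ler_sum => y _.
rewrite -mulrBr; case: (Hg y) => [g0|bot]; first by apply: ler_wpM2l => //; apply: cnt_bound.
by rewrite cnt_all // (bot h0) (bot (last h0 t)).
Qed.

Lemma bound_eq g a x : (forall y, (y < a)%O -> g y = 0) ->
  \sum_y g y * ((y <= a)%O && (y <= x)%O)%:R = if (a <= x)%O then g a else 0.
Proof.
move=> H; rewrite (bigD1 a) //= lexx /= big1 ?addr0.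
  by case: ifP => _; rewrite ?mulr1 ?mulr0.
move=> y ya; case: (boolP (y <= a)%O) => yla /=; last by rewrite mulr0.
by rewrite H ?mul0r // lt_neqAle ya yla.
Qed.

Lemma rep_at g a : (forall y, (y < a)%O -> g y = 0) -> rep g a = g a.
Proof.
move=> H; rewrite /rep (bigD1 a) ?lexx //= big1 ?addr0 // => y /andP [yla ya].
by apply: H; rewrite lt_neqAle ya yla.
Qed.

Lemma max_seed (s : seq (seq T)) (F : seq T -> R) (x0 : R) :
  x0 <= \big[Num.max/x0]_(t <- s) F t.
Proof.
elim: s => [|t s IH]; rewrite ?big_nil ?big_cons //; by rewrite le_max IH orbT.
Qed.

Lemma lambda_rep g a x : (forall y, 0 <= g y \/ forall z, (y <= z)%O) ->
  (forall y, (y < a)%O -> g y = 0) ->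
  lambda (rep g) a x <= (if (a <= x)%O then g a else 0) /\
  ((a <= x)%O -> g a <= lambda (rep g) a x).
Proof.
move=> Hg Hz; split.
  rewrite /lambda big_seq; apply: (big_ind (fun v => v <= _)).
  - have := pathval_le g a (if a == x then [::] else [:: x]) Hg.
    have -> : last a (if a == x then [::] else [:: x]) = x by case: eqP.
    by rewrite bound_eq.
  - by move=> u v hu hv; rewrite ge_max hu hv.
  - move=> t; rewrite mem_filter => /andP [/andP [_ /eqP lt] _].
    by have := pathval_le g a t Hg; rewrite lt bound_eq.
move=> ax; rewrite /lambda; apply: le_trans (max_seed _ _ _).
rewrite -(rep_at g a Hz) /pathval; case: eqP => [_|ne].
  by rewrite !big_cons !big_nil /= addr0 subr0.

rewrite !big_cons !big_nil /=.
by rewrite join_r // !addr0 addrK.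
Qed.

Lemma foldr_nabla (phi f : T -> R) : (forall x, phi x = \sum_(y | (y <= x)%O) f y) ->
  forall s x, foldr (nabla (@Order.meet d T)) phi s x =
   \sum_(z | (z <= x)%O && all (fun b => ~~ (z <= b)%O) s) f z.
Proof.
move=> Hphi; elim=> [|b s IH] x /=.
  by rewrite Hphi; apply: eq_bigl => z; rewrite andbT.
rewrite /nabla !IH (bigID (fun z => (z <= b)%O)) /=.
have -> : \sum_(z | (z <= x `&` b)%O && all (fun b0 => ~~ (z <= b0)%O) s) f z =
  \sum_(z | (z <= x)%O && all (fun b0 => ~~ (z <= b0)%O) s && (z <= b)%O) f z.
  by apply: eq_bigl => z; rewrite lexI andbAC.
rewrite addrAC subrr add0r; apply: eq_bigl => z; by rewrite andbAC andbA.
Qed.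

Lemma f_nonneg (phi f : T -> R) : M_inf_L phi ->
  (forall x, phi x = \sum_(y | (y <= x)%O) f y) ->
  forall y, 0 <= f y \/ forall z, (y <= z)%O.
Proof.
move=> [_ cm] Hphi y.
case: (boolP [exists z, (z < y)%O]) => [/existsP [z zy]|/existsPn nz]; [left|right].
  have hs : (0 < size [seq b <- enum T | (b < y)%O])%N.
    by rewrite size_filter -has_count; apply/hasP; exists z; rewrite ?mem_enum.
  have := cm [seq b <- enum T | (b < y)%O] hs (all_predT _) y isT.
  rewrite (foldr_nabla _ _ Hphi).
  rewrite (eq_bigl (pred1 y)) ?big_pred1_eq //.
    move=> w /=; apply/idP/idP.
      case/andP => wy /allP al; apply/negPn/negP => ne.
      have /al : w \in [seq b <- enum T | (b < y)%O] by rewrite mem_filter lt_neqAle ne wy mem_enum.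
      by rewrite lexx.
    move/eqP ->; rewrite lexx /=; apply/allP => b; rewrite mem_filter => /andP [bl _].
    by rewrite lt_geF.
move=> z; have := nz (Order.meet y z); rewrite lt_neqAle leIl andbT negbK => /eqP <-.
exact: leIr.
Qed.

Lemma mono_LL (Psi : {set T} -> R) W V : M_inf_LL Psi -> inLL W -> inLL V ->
  Psi (W :|: V) <= Psi W.
Proof.
move=> [_ cm] hW hV; have hs : all (@inLL _ T) [:: V] by rewrite /= hV.
have := cm [:: V] isT hs W hW.
by rewrite /= /nabla subr_ge0.
Qed.

Arguments mono_LL {Psi W V}.
Lemma inLL_prin (x : T) : inLL (prin x).
Proof.
apply/andP; split; first by apply/set0Pn; exists x; rewrite inE.
apply/forallP => u; apply/implyP; rewrite inE => xu; apply/forallP => v.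
by apply/implyP => uv; rewrite inE (le_trans xu uv).
Qed.

Lemma prin_sub (U : {set T}) (u : T) : up_closed U -> u \in U -> prin u \subset U.
Proof.
move=> hU uU; apply/subsetP => v; rewrite inE => uv.
by move/forallP/(_ u): hU => /implyP/(_ uU)/forallP/(_ v)/implyP; apply.
Qed.

Arguments prin_sub {U u}.
Lemma prin_inj (x y : T) : prin x = prin y -> x = y.
Proof.
move=> e; apply/le_anti/andP; split.
  have h1 : y \in prin x by rewrite e inE.
  by move: h1; rewrite inE.
have h1 : x \in prin y by rewrite -e inE.
by move: h1; rewrite inE.
Qed.

Lemma Psi_val (Psi : {set T} -> R) (a : T) (c : R) U : M_inf_LL Psi ->
  (forall z, Psi (prin z) = if (a <= z)%O then c else 0) -> inLL U ->
  Psi U = if U \subset prin a then c else 0.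
Proof.
move=> hP hv hU; have [hnn _] := hP; move: (hU) => /andP [/set0Pn [u uU] upU].
have key : forall w, w \in U -> Psi U <= Psi (prin w).
  move=> w wU; have := mono_LL hP (inLL_prin w) hU.
  by rewrite (setUidPr (prin_sub upU wU)).
case: ifP => sub.
  apply/le_anti/andP; split.
    have := key u uU; rewrite hv.
    by move/subsetP: sub => /(_ u uU); rewrite inE => ->.
  have := mono_LL hP hU (inLL_prin a).
  by rewrite (setUidPr sub) hv lexx.
move/negbT/subsetPn: sub => [w wU wn]; rewrite inE in wn.
apply/le_anti/andP; split; last exact: hnn U hU.
by have := key w wU; rewrite hv (negbTE wn).
Qed.

Lemma moeb_eq (f : T -> R) U :
  moebius_ext f U = \sum_x (if U \subset prin x then f x else 0).
Proof.
rewrite /moebius_ext.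
transitivity (\sum_(V | inLL V && (U \subset V)) \sum_x (if V == prin x then f x else 0)).
  apply: eq_bigr => V _; rewrite /moebF; case: pickP => [x0 /eqP -> | none].
    rewrite (bigD1 x0) //= eqxx big1 ?addr0 // => x xne; rewrite ifN //.
    by apply/negP => /eqP /prin_inj e; move: xne; rewrite e eqxx.
  by rewrite big1 // => x _; rewrite none.
rewrite exchange_big /=; apply: eq_bigr => x _; rewrite -big_mkcondr.
case: ifP => sub.
  rewrite (eq_bigl (pred1 (prin x))) ?big_pred1_eq // => V /=.
  by case: eqP => [->|_]; rewrite ?andbF ?inLL_prin ?sub.
rewrite big_pred0 // => V /=.
by case: eqP => [->|_]; rewrite ?andbF ?inLL_prin ?sub.
Qed.

End Aux.
Theorem corollary3p17 (d : Order.disp_t) (T : finLatticeType d) (R : realFieldType)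
  (phi f : T -> R) (n : nat) (a : 'I_n -> T)
  (phis : nat -> T -> R) (Psi : nat -> {set T} -> R) :
  M_inf_L phi ->
  (forall x, phi x = \sum_(y | (y <= x)%O) f y) ->
  bijective a ->
  (forall i j : 'I_n, (a i < a j)%O -> (i < j)%N) ->
  phis 0%N =1 phi ->
  (forall i : 'I_n, phis i.+1 =1 Lambda (a i) (phis i)) ->
  (forall i : 'I_n, M_inf_LL (Psi i) /\ Pi (Psi i) =1 lambda (phis i) (a i)) ->
  M_inf_LL (Psi n) ->
  Pi (Psi n) =1 phis n ->
  forall U : {set T}, inLL U ->
    \sum_(i < n.+1) Psi i U = moebius_ext f U.
Proof.
move=> hphi hf [ai aK aiK] hlin h0 hstep hPsi hPn hPin U hU.
pose gg (i : nat) (y : T) := if (i <= ai y)%N then f y else 0.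
have Hnn := f_nonneg _ _ hphi hf.
have Hgg : forall i y, 0 <= gg i y \/ forall z, (y <= z)%O.
  by move=> i y; rewrite /gg; case: ifP => _; [exact: Hnn | left].
have Hlam : forall (j : 'I_n) x, phis j = rep (gg j) ->
    lambda (phis j) (a j) x = if (a j <= x)%O then f (a j) else 0.
  move=> j x e.
  have Hz : forall y, (y < a j)%O -> gg j y = 0.
    move=> y ya; rewrite /gg ifN // -ltnNge; apply: (hlin _ j); by rewrite aiK.
  have gaj : gg j (a j) = f (a j) by rewrite /gg aK leqnn.
  have [up lo] := lambda_rep _ _ x (Hgg j) Hz; rewrite gaj in up lo.
  rewrite e; case: ifP => ax in up lo *; apply/le_anti; rewrite up ?lo //=.
  have h := (proj2 (hPsi j)) x; rewrite /Pi e in h; rewrite -h.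
  exact: (proj1 (proj1 (hPsi j))) _ (inLL_prin x).
have Hrep : forall i, (i <= n)%N -> phis i = rep (gg i).
  elim=> [|i IH] hi; apply: functional_extensionality => x.
    by rewrite h0 hf /rep; apply: eq_bigr => y _; rewrite /gg leq0n.
  have hin : (i < n)%N by [].
  pose j := Ordinal hin.
  have := hstep j x; rewrite /= => ->; rewrite /Lambda.
  have e := IH (ltnW hi).
  rewrite (Hlam j x e) e /rep.
  have -> : \sum_(y | (y <= x)%O) gg i y = \sum_(y | (y <= x)%O) gg i.+1 y
       + \sum_(y | (y <= x)%O) (if y == a j then f y else 0).
    rewrite -big_split; apply: eq_bigr => y _ /=; rewrite /gg.
    case: eqP => [->|ne]; first by rewrite aK leqnn ltnn add0r.
    have ne' : (ai y : nat) != i by apply/eqP => eq; apply: ne; rewrite -(aiK y); congr a; exact: val_inj.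
    by rewrite (leq_eqVlt i) eq_sym (negbTE ne') /= addr0.
  have -> : \sum_(y | (y <= x)%O) (if y == a j then f y else 0)
       = if (a j <= x)%O then f (a j) else 0.
    rewrite -big_mkcondr; case: ifP => ax.
      rewrite (eq_bigl (pred1 (a j))) ?big_pred1_eq // => y /=.
      by case: eqP => [->|_]; rewrite ?andbF ?andbT.
    rewrite big_pred0 // => y /=.
    by case: eqP => [->|_]; rewrite ?andbF ?ax.
  by rewrite addrK.
have HPsi_i : forall j : 'I_n, Psi j U = if U \subset prin (a j) then f (a j) else 0.
  move=> j; apply: (Psi_val _ _ _ _ (proj1 (hPsi j)) _ hU) => z.
  rewrite /Pi in hPsi; rewrite (proj2 (hPsi j) z).
  exact: Hlam (Hrep j (ltnW (ltn_ord j))).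
have HPsin : Psi n U = 0.
  have /andP [/set0Pn [u0 _] _] := hU.
  rewrite (Psi_val _ u0 0 _ hPn _ hU) ?if_same // => z.
  rewrite -/(Pi (Psi n) z) hPin (Hrep n (leqnn n)) /rep big1 ?if_same // => y _.
  by rewrite /gg leqNgt -{2}(aiK y) ltn_ord.
rewrite big_ord_recr /= HPsin addr0 moeb_eq (reindex a) /=; last first.
  by exists ai => x _; [rewrite aK | rewrite aiK].
by apply: eq_bigr => i _; rewrite HPsi_i.
Qed.
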